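(* Let $\pi$ be a probability distribution on $[K]^n$ ($K\ge2$). The Markov kernel $P_{\mathrm{R}}$ is $\pi$-reversible. Moreover, if $\pi(c)>0$ for every $c\in[K]^n$, then $P_{\mathrm{R}}$ is irreducible, aperiodic and uniformly ergodic.
   Context: Notation: $[K]=\{1,\dots,K\}$; $n_k(c)=\#\{i:c_i=k\}$; $(c_{-i},k)$ is $c$ with $c_i$ replaced by $k$; $\pi(c_i=k\mid c_{-i})=\pi((c_{-i},k))/\sum_j\pi((c_{-i},j))$. $\mathcal{K}=\{(k,k')\in[K]^2:k<k'\}$ and $p_c(k,k')=\frac{n_k(c)+n_{k'}(c)}{(K-1)n}$ for $(k,k')\in\mathcal K$. $r(c,i,k_-,k_+)=\frac{n_{k_-}(c)}{n_{k_+}(c)+1}\cdot\frac{\pi(c_i=k_+\mid c_{-i})}{\pi(c_i=k_-\mid c_{-i})}$. $P_{\mathrm{R}}$ is the kernel on $[K]^n$ that from $c$: samples $(k,k')\sim p_c$; sets $(k_-,k_+)=(k,k')$ or $(k',k)$ with probability $1/2$ each; if $n_{k_-}(c)=0$ stays at $c$; otherwise picks $i$ uniformly from $\{i':c_{i'}=k_-\}$ and moves to $(c_{-i},k_+)$ with probability $\min\{1,r(c,i,k_-,k_+)\}$, else stays at $c$. *)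

(* Defs.v *)
From HB Require Import structures.
From mathcomp Require Import all_boot all_order all_algebra.
Set Implicit Arguments. Unset Strict Implicit. Unset Printing Implicit Defensive.
Import Order.TTheory GRing.Theory Num.Theory.
Local Open Scope ring_scope.

(* State space [K]^n ; labels are 0..K-1 (i.e. 'I_K) instead of 1..K. *)
Definition cfg (n K : nat) := {ffun 'I_n -> 'I_K}.

Section Kernel.
Variables (R : realFieldType) (n K : nat).
Variable pi : cfg n K -> R.

Definition cnt (c : cfg n K) (k : 'I_K) : nat := #|[set i | c i == k]|.

Definition upd (c : cfg n K) (i : 'I_n) (k : 'I_K) : cfg n K :=
  [ffun j => if j == i then k else c j].

Definition condp (c : cfg n K) (i : 'I_n) (k : 'I_K) : R :=
  pi (upd c i k) / \sum_(j : 'I_K) pi (upd c i j).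

Definition pc (c : cfg n K) (k k' : 'I_K) : R :=
  (cnt c k + cnt c k')%:R / ((K - 1) * n)%:R.

Definition ratio (c : cfg n K) (i : 'I_n) (km kp : 'I_K) : R :=
  (cnt c km)%:R / (cnt c kp + 1)%:R * (condp c i kp / condp c i km).

Definition oriented_step (c : cfg n K) (km kp : 'I_K) (c' : cfg n K) : R :=
  if cnt c km == 0%N then (c' == c)%:R
  else (cnt c km)%:R^-1 *
       \sum_(i : 'I_n | c i == km)
         (Num.min 1 (ratio c i km kp) * (c' == upd c i kp)%:R
          + (1 - Num.min 1 (ratio c i km kp)) * (c' == c)%:R).

Definition PR (c c' : cfg n K) : R :=
  \sum_(k : 'I_K) \sum_(k' : 'I_K | (k < k')%N)
     pc c k k' * (2^-1 * oriented_step c k k' c' + 2^-1 * oriented_step c k' k c').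

End Kernel.

Section Chains.
Variables (R : realFieldType) (S : finType).

Fixpoint kpow (P : S -> S -> R) (t : nat) : S -> S -> R :=
  match t with
  | 0 => fun x y => (x == y)%:R
  | t'.+1 => fun x y => \sum_(z : S) kpow P t' x z * P z y
  end.

Definition is_prob (mu : S -> R) : Prop :=
  (forall x, 0 <= mu x) /\ \sum_(x : S) mu x = 1.

Definition reversible (P : S -> S -> R) (mu : S -> R) : Prop :=
  forall x y, mu x * P x y = mu y * P y x.

Definition irreducible (P : S -> S -> R) : Prop :=
  forall x y, exists t : nat, 0 < kpow P t x y.

(* period of x = gcd {t >= 1 : P^t(x,x) > 0}; aperiodic: every period is 1,
   i.e. no d >= 2 divides all return times. *)
Definition aperiodic (P : S -> S -> R) : Prop :=
  forall x (d : nat), (1 < d)%N ->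
    ~ (forall t : nat, (0 < t)%N -> 0 < kpow P t x x -> (d %| t)%N).

Definition tv (mu nu : S -> R) : R :=
  \big[Num.max/0]_(A : {set S}) `|\sum_(x in A) mu x - \sum_(x in A) nu x|.

Definition uniformly_ergodic (P : S -> S -> R) (mu : S -> R) : Prop :=
  exists (M rho : R), 0 <= rho /\ rho < 1 /\
    forall (x : S) (t : nat), tv (kpow P t x) mu <= M * rho ^+ t.

End Chains.

(* Main.v *)
Require Import Defs.
From HB Require Import structures.
From mathcomp Require Import all_boot all_order all_algebra.
From mathcomp Require Import ring lra zify.
Import Order.TTheory GRing.Theory Num.Theory.
Local Open Scope ring_scope.
Set Implicit Arguments. Unset Strict Implicit.

Section Gen.
Variables (R : realFieldType) (S : finType) (P : S -> S -> R).
Hypothesis Pge0 : forall x y, 0 <= P x y.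

Lemma kpow1 x y : kpow P 1 x y = P x y.
Proof.
rewrite /= (bigD1 x) //= eqxx mul1r big1 ?addr0 // => z /negbTE.
by rewrite eq_sym => ->; rewrite mul0r.
Qed.

Lemma kpow_ge0 t x y : 0 <= kpow P t x y.
Proof.
elim: t x y => [|t IH] x y /=; first by case: (x == y).
by apply: sumr_ge0 => z _; apply: mulr_ge0.
Qed.

Lemma kpowD s t x y :
  kpow P (s + t) x y = \sum_z kpow P s x z * kpow P t z y.
Proof.
elim: t y => [|t IH] y.
  rewrite addn0 /= (bigD1 y) //= eqxx mulr1 big1 ?addr0 // => z /negbTE ->.
  by rewrite mulr0.
rewrite addnS /=.
under eq_bigr => z _ do rewrite IH mulr_suml.
rewrite exchange_big /=; apply: eq_bigr => w _.
by rewrite mulr_sumr; apply: eq_bigr => z _; rewrite mulrA.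
Qed.

Lemma kpow_pos_trans s t x z y :
  0 < kpow P s x z -> 0 < kpow P t z y -> 0 < kpow P (s + t) x y.
Proof.
move=> h1 h2; rewrite kpowD (bigD1 z) //=.
apply: ltr_wpDr; first by apply: sumr_ge0 => w _; apply: mulr_ge0; apply: kpow_ge0.
exact: mulr_gt0.
Qed.

Hypothesis Psum : forall x, \sum_y P x y = 1.

Lemma kpow_sum t x : \sum_y kpow P t x y = 1.
Proof.
elim: t x => [|t IH] x /=.
  rewrite (bigD1 x) //= eqxx big1 ?addr0 // => z; rewrite eq_sym => /negbTE -> //.
rewrite exchange_big /=.
under eq_bigr => z _ do rewrite -mulr_sumr Psum mulr1.
exact: IH.
Qed.

Variable mu : S -> R.
Hypothesis mu_prob : is_prob mu.
Hypothesis stat : forall y, \sum_x mu x * P x y = mu y.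

Lemma kpow_stat t y : \sum_x mu x * kpow P t x y = mu y.
Proof.
elim: t y => [|t IH] y /=.
  rewrite (bigD1 y) //= eqxx mulr1 big1 ?addr0 // => z /negbTE ->; by rewrite mulr0.
under eq_bigr => x _ do rewrite mulr_sumr.
rewrite exchange_big /=.
under eq_bigr => z _ do (under eq_bigr => x _ do rewrite mulrA; rewrite -mulr_suml IH).
exact: stat.
Qed.

Lemma contract (Q : S -> S -> R) (d : R) (f : S -> R) :
  (forall z y, d * mu y <= Q z y) -> (forall z, \sum_y Q z y = 1) ->
  \sum_z f z = 0 ->
  \sum_y `|\sum_z f z * Q z y| <= (1 - d) * \sum_z `|f z|.
Proof.
move=> hQ hs hf.
have e y : \sum_z f z * Q z y = \sum_z f z * (Q z y - d * mu y).
  under [RHS]eq_bigr => z _ do rewrite mulrBr.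
  by rewrite sumrB -mulr_suml hf mul0r subr0.
under eq_bigr => y _ do rewrite e.
apply: le_trans (_ : \sum_y \sum_z `|f z| * (Q z y - d * mu y) <= _).
  apply: ler_sum => y _; apply: le_trans (ler_norm_sum _ _ _) _.
  apply: ler_sum => z _; rewrite normrM [`|_ - _|]ger0_norm ?subr_ge0 //; exact: hQ.
rewrite exchange_big /= mulr_sumr; apply: ler_sum => z _.
rewrite -mulr_sumr sumrB hs -mulr_sumr.
case: mu_prob => _ ->; rewrite mulr1 mulrC; exact: lexx.
Qed.


Definition D t x := \sum_y `|kpow P t x y - mu y|.

Lemma mu_le1 y : mu y <= 1.
Proof.
case: mu_prob => h1 h2; rewrite -h2 (bigD1 y) //= ler_wpDr //.
by apply: sumr_ge0 => z _.
Qed.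

Lemma D_le2 t x : D t x <= 2.
Proof.
rewrite /D; apply: le_trans (_ : \sum_y (kpow P t x y + mu y) <= _).
  apply: ler_sum => y _; apply: le_trans (ler_normB _ _) _.
  rewrite !ger0_norm ?kpow_ge0 //; by case: mu_prob.
rewrite big_split /= kpow_sum; case: mu_prob => _ ->; exact: lexx.
Qed.

Lemma D_step (T : nat) (d : R) t x :
  (forall z y, d * mu y <= kpow P T z y) ->
  D (t + T) x <= (1 - d) * D t x.
Proof.
move=> hQ; rewrite /D.
have e y : kpow P (t + T) x y - mu y =
   \sum_z (kpow P t x z - mu z) * kpow P T z y.
  under [RHS]eq_bigr => z _ do rewrite mulrBl.
  by rewrite sumrB kpowD kpow_stat.
under eq_bigr => y _ do rewrite e.
apply: contract => //; first by move=> z; apply: kpow_sum.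
by rewrite sumrB kpow_sum; case: mu_prob => _ ->; rewrite subrr.
Qed.

Lemma tv_le_D t x : tv (kpow P t x) mu <= D t x.
Proof.
rewrite /tv; apply: bigmax_le.
  by rewrite /D; apply: sumr_ge0 => y _.
move=> A _; rewrite -sumrB; apply: le_trans (ler_norm_sum _ _ _) _.
rewrite /D [X in _ <= X](bigID (fun y => y \in A)) /= ler_wpDr //.
by apply: sumr_ge0.
Qed.

Lemma bernoulli (x : R) (m : nat) : 0 <= x -> x <= 1 -> 1 - m%:R * x <= (1 - x) ^+ m.
Proof.
move=> h0 h1; elim: m => [|m IH]; first by rewrite mul0r subr0 expr0.
rewrite exprSr -natr1.
have hp : 0 <= (1 - x) ^+ m by apply: exprn_ge0; lra.
have hm : 0 <= m%:R :> R by [].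
nra.
Qed.

Theorem gen_ergodic :
  (exists T, (0 < T)%N /\ forall x y, 0 < kpow P T x y) -> uniformly_ergodic P mu.
Proof.
case=> T [T0 hT].
pose d := \big[Num.min/2^-1]_(p : S * S) kpow P T p.1 p.2.
have d0 : 0 < d by apply: lt_bigmin => [|p _]; [rewrite invr_gt0 | apply: hT].
have d1 : d <= 2^-1 by apply: bigmin_le_id.
have dQ z y : d <= kpow P T z y by apply: (bigmin_le _ (z, y)).
have hQ z y : d * mu y <= kpow P T z y.
  apply: le_trans _ (dQ z y); have := mu_le1 y.
  have : 0 <= mu y by case: mu_prob.
  nra.
have Tp : 0 < T%:R :> R by rewrite ltr0n.
pose rho := 1 - d / T%:R.
have dT : d / T%:R <= d.
  by rewrite ler_pdivrMr // ler_peMr ?(ltW d0) // ler1n.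
have rho0 : 0 < rho by rewrite /rho; lra.
have dT0 : 0 <= d / T%:R by rewrite divr_ge0 // ?(ltW d0) ?ltW.
have rho1 : rho <= 1 by rewrite /rho; lra.
have bern : 1 - d <= rho ^+ T.
  have hb := bernoulli T dT0 (ltac:(lra)).
  by rewrite [_ * (_ / _)]mulrC divfK ?gt_eqF in hb.
have Dq q r x : D (q * T + r) x <= 2 * (1 - d) ^+ q.
  elim: q => [|q IH]; first by rewrite mul0n add0n expr0 mulr1 D_le2.
  have -> : (q.+1 * T + r = (q * T + r) + T)%N by rewrite mulSn; lia.
  apply: le_trans (D_step (q * T + r) x hQ) _.
  rewrite exprS mulrCA ler_wpM2l //; rewrite subr_ge0; apply: le_trans d1 _.
  lra.
exists (2 / rho ^+ T), rho; split; first exact: ltW.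
have dTp : 0 < d / T%:R by rewrite divr_gt0.
split; first by rewrite /rho; lra.
move=> x t; apply: le_trans (tv_le_D t x) _.
rewrite (divn_eq t T); apply: le_trans (Dq _ _ x) _.
have rT : 0 < rho ^+ T by apply: exprn_gt0.
apply: le_trans (_ : 2 * rho ^+ (T * (t %/ T)) <= _).
  rewrite ler_wpM2l // exprM; apply: lerXn2r => //; rewrite ?nnegrE; lra.
rewrite -(divn_eq t T) mulrAC -mulrA ler_wpM2l // ler_pdivlMr // -exprD.
apply: ler_wiXn2l; rewrite ?(ltW rho0) //.
by rewrite mulnC {1}(divn_eq t T) leq_add2l ltnW // ltn_mod.
Qed.

End Gen.

Lemma sum_ind (T : finType) (x : T) (R : realFieldType) : \sum_(y : T) ((y == x)%:R : R) = 1.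
Proof.
rewrite (bigD1 x) //= eqxx big1 ?addr0 // => y /negbTE -> //.
Qed.

Lemma pair_count (K : nat) (k : 'I_K) :
  (\sum_(k' : 'I_K | (k < k')%N) 1 + \sum_(k' : 'I_K | (k' < k)%N) 1 = K - 1)%N.
Proof.
have h : (\sum_(k' : 'I_K) 1 = K)%N by rewrite sum1_card card_ord.
rewrite (bigD1 k) //= (bigID (fun k' : 'I_K => (k < k')%N)) /= in h.
have e1 : (\sum_(i | (i != k) && (k < i)%N) 1 = \sum_(k' : 'I_K | (k < k')%N) 1)%N.
  apply: eq_bigl => i; rewrite -val_eqE /=; case: ltngtP => //= ->; by rewrite eqxx.
have e2 : (\sum_(i | (i != k) && ~~ (k < i)%N) 1 = \sum_(k' : 'I_K | (k' < k)%N) 1)%N.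
  apply: eq_bigl => i; rewrite -val_eqE /=; case: ltngtP => //= ->; by rewrite eqxx.
rewrite e1 e2 in h; lia.
Qed.

Lemma pair_sum (K : nat) (f : 'I_K -> nat) :
  (\sum_(k : 'I_K) \sum_(k' : 'I_K | (k < k')%N) (f k + f k') = (K - 1) * \sum_k f k)%N.
Proof.
rewrite -(eq_bigr _ (fun k _ => esym (big_split _ _ _ _ _))) /=.
rewrite big_split /=.
have -> : (\sum_(k : 'I_K) \sum_(k' : 'I_K | (k < k')%N) f k' =
           \sum_(k : 'I_K) \sum_(k' : 'I_K | (k' < k)%N) f k)%N.
  by rewrite (exchange_big_dep xpredT).
rewrite -big_split big_distrr /=; apply: eq_bigr => k _.
rewrite -(pair_count k) mulnDl !big_distrl /=.
by congr (_ + _)%N; apply: eq_bigr => i _; rewrite mul1n.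
Qed.

Section Model.
Variables (R : realFieldType) (n K : nat) (pi : cfg n K -> R).
Hypothesis K2 : (2 <= K)%N.
Hypothesis n1 : (1 <= n)%N.
Hypothesis pi0 : forall c, 0 <= pi c.

Lemma cnt_sum (c : cfg n K) : (\sum_k cnt c k = n)%N.
Proof.
rewrite /cnt.
under eq_bigr => k _ do rewrite -sum1_card.
rewrite (exchange_big_dep xpredT) //=.
rewrite -[RHS](card_ord n) -sum1_card; apply: eq_bigr => i _.
rewrite (bigD1 (c i)) ?inE //= big1 // => k; rewrite inE => /andP[/eqP -> /negbTE].
by rewrite eqxx.
Qed.

Lemma cnt_R (c : cfg n K) a : \sum_(i | c i == a) (1 : R) = (cnt c a)%:R.
Proof.
rewrite /cnt -sumr_const; apply: eq_bigl => i; by rewrite inE.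
Qed.

Lemma condp_ge0 c i k : 0 <= condp pi c i k.
Proof. by rewrite /condp divr_ge0 // sumr_ge0. Qed.

Lemma ratio_ge0 c i a b : 0 <= Defs.ratio pi c i a b.
Proof.
rewrite /Defs.ratio; apply: mulr_ge0; first by apply: divr_ge0.
by apply: divr_ge0; apply: condp_ge0.
Qed.

Lemma min_ge0 c i a b : 0 <= Num.min 1 (Defs.ratio pi c i a b).
Proof. by rewrite le_min ler01 ratio_ge0. Qed.

Lemma min_le1 c i a b : Num.min 1 (Defs.ratio pi c i a b) <= 1.
Proof. by rewrite ge_min lexx. Qed.

Lemma os_ge0 c a b c' : 0 <= oriented_step pi c a b c'.
Proof.
rewrite /oriented_step; case: ifP => _; first by [].
apply: mulr_ge0; first by rewrite invr_ge0.
apply: sumr_ge0 => i _; apply: addr_ge0; apply: mulr_ge0 => //.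
  exact: min_ge0.
by rewrite subr_ge0 min_le1.
Qed.

Lemma pc_ge0 (c : cfg n K) a b : 0 <= pc R c a b.
Proof. by rewrite /pc divr_ge0. Qed.

Lemma PR_ge0 c c' : 0 <= PR pi c c'.
Proof.
apply: sumr_ge0 => k _; apply: sumr_ge0 => k' _; apply: mulr_ge0; first exact: pc_ge0.
by apply: addr_ge0; apply: mulr_ge0; rewrite ?invr_ge0 ?os_ge0.
Qed.

Lemma os_sum c a b : \sum_c' oriented_step pi c a b c' = 1.
Proof.
rewrite /oriented_step; case h: (cnt c a == 0%N); first exact: sum_ind.
rewrite -mulr_sumr exchange_big /=.
have e (m : R) (u : cfg n K) :
  \sum_c' (m * (c' == u)%:R + (1 - m) * (c' == c)%:R) = 1.
  by rewrite big_split /= -!mulr_sumr !sum_ind !mulr1 addrC subrK.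
under eq_bigr => i _ do rewrite e.
by rewrite cnt_R mulVf // pnatr_eq0 h.
Qed.

Lemma pc_sum (c : cfg n K) : \sum_(k : 'I_K) \sum_(k' : 'I_K | (k < k')%N) pc R c k k' = 1.
Proof.
have e : \sum_(k : 'I_K) \sum_(k' : 'I_K | (k < k')%N) ((cnt c k + cnt c k')%:R : R)
          = ((K - 1) * n)%:R.
  rewrite -[X in ((K - 1) * X)%N](cnt_sum c) -pair_sum natr_sum; apply: eq_bigr => k _.
  by rewrite natr_sum.
rewrite /pc.
under eq_bigr => k _ do rewrite -mulr_suml.
rewrite -mulr_suml e divff // pnatr_eq0 muln_eq0 negb_or; apply/andP; split; lia.
Qed.

Lemma PR_sum c : \sum_c' PR pi c c' = 1.
Proof.
rewrite /PR exchange_big /= -[RHS](pc_sum c); apply: eq_bigr => k _.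
rewrite exchange_big /=; apply: eq_bigr => k' _.
rewrite -mulr_sumr big_split /= -!mulr_sumr !os_sum mulr1.
have -> : (2^-1 + 2^-1 : R) = 1 by field.
by rewrite mulr1.
Qed.


Lemma min10 : Num.min 1 0 = 0 :> R.
Proof. by apply/min_idPr; rewrite ler01. Qed.

Lemma alg (x y Z p N M : R) : 0 <= x -> 0 <= y -> 0 < N -> 0 < M ->
  x * (p * (N^-1 * Num.min 1 (N / M * ((y / Z) / (x / Z))))) =
  y * (p * (M^-1 * Num.min 1 (M / N * ((x / Z) / (y / Z))))).
Proof.
move=> x0 y0 N0 M0.
have [->|Z0] := eqVneq Z 0.
  by rewrite !invr0 !(mul0r, mulr0, min10).
have [->|xn0] := eqVneq x 0.
  by rewrite !(mul0r, mulr0, min10).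
have [->|yn0] := eqVneq y 0.
  by rewrite !(mul0r, mulr0, min10).
have e1 : (y / Z) / (x / Z) = y / x by field; rewrite xn0 Z0.
have e2 : (x / Z) / (y / Z) = x / y by field; rewrite yn0 Z0.
rewrite e1 e2 mulrCA [RHS]mulrCA; congr (_ * _).
rewrite !mulrA (mulrC x) (mulrC y) -!mulrA.
have hx : 0 <= N^-1 * x by rewrite mulr_ge0 // invr_ge0 ltW.
have hy : 0 <= M^-1 * y by rewrite mulr_ge0 // invr_ge0 ltW.
rewrite mulrA minr_pMr // mulr1 [RHS]mulrA minr_pMr // mulr1 minC.
have -> : N^-1 * x * (N * (M^-1 * (y / x))) = M^-1 * y by field; rewrite ?xn0 ?yn0 ?gt_eqF.
have -> : M^-1 * y * (M * (N^-1 * (x / y))) = N^-1 * x by field; rewrite ?xn0 ?yn0 ?gt_eqF.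
by [].
Qed.


Lemma updE (c : cfg n K) i k j : upd c i k j = if j == i then k else c j.
Proof. by rewrite /upd ffunE. Qed.

Lemma upd_id (c : cfg n K) i : upd c i (c i) = c.
Proof. by apply/ffunP => j; rewrite updE; case: eqP => // ->. Qed.

Lemma upd_upd (c : cfg n K) i a b : upd (upd c i a) i b = upd c i b.
Proof. by apply/ffunP => j; rewrite !updE; case: eqP. Qed.

Lemma upd_at (c : cfg n K) i k : upd c i k i = k.
Proof. by rewrite updE eqxx. Qed.

Lemma upd_neq_c (c : cfg n K) i b : c i != b -> upd c i b != c.
Proof. by move=> h; apply/eqP => e; move: h; rewrite -{1}e upd_at eqxx. Qed.

Lemma upd_neq2 (c : cfg n K) i i' b : c i' != b -> i' != i -> upd c i b != upd c i' b.
Proof.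
move=> h hi; apply/eqP => e; move: (congr1 (fun f : cfg n K => f i') e) => /=.
by rewrite upd_at updE (negbTE hi) => /eqP; rewrite (negbTE h).
Qed.

Lemma cnt_nat (c : cfg n K) k : cnt c k = (\sum_j (c j == k))%N.
Proof.
rewrite /cnt -sum1_card big_mkcond /=; apply: eq_bigr => j _; rewrite inE.
by case: (c j == k).
Qed.

Lemma cnt_upd (c : cfg n K) i b k :
  (cnt (upd c i b) k + (c i == k) = cnt c k + (b == k))%N.
Proof.
rewrite !cnt_nat (bigD1 i) //= [X in (_ = X + _)%N](bigD1 i) //= upd_at.
have -> : (\sum_(j | j != i) (upd c i b j == k) = \sum_(j | j != i) (c j == k))%N.
  by apply: eq_bigr => j hj; rewrite updE (negbTE hj).
move: (_ == k)%N (c i == k) (\sum_(j | j != i) (c j == k))%N => x y z; lia.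
Qed.

Lemma cnt_pos (c : cfg n K) i : (0 < cnt c (c i))%N.
Proof. by rewrite /cnt card_gt0; apply/set0Pn; exists i; rewrite inE. Qed.

Lemma os_move (c : cfg n K) i b : c i != b ->
  oriented_step pi c (c i) b (upd c i b) =
  (cnt c (c i))%:R^-1 * Num.min 1 (Defs.ratio pi c i (c i) b).
Proof.
move=> hb; rewrite /oriented_step eqn0Ngt cnt_pos /=; congr (_ * _).
rewrite (bigD1 i) //= eqxx (negbTE (upd_neq_c hb)) mulr1 mulr0 addr0 big1 ?addr0 //.
move=> j /andP[/eqP hj ji].
have h1 : c j != b by rewrite hj.
by rewrite (negbTE (upd_neq2 h1 ji)) !mulr0 addr0.
Qed.

Lemma os_zero (c c' : cfg n K) a b : c' != c ->
  (forall i, c i = a -> c' != upd c i b) -> oriented_step pi c a b c' = 0.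
Proof.
move=> hc h; rewrite /oriented_step (negbTE hc); case: ifP => _; first by [].
rewrite big1 ?mulr0 // => i /eqP /h /negbTE ->; by rewrite !mulr0 addr0.
Qed.

Lemma pc_upd (c : cfg n K) i b :
  pc R (upd c i b) (c i) b = pc R c (c i) b.
Proof.
rewrite /pc; congr (_%:R / _).
have [e|ne] := eqVneq (c i) b; first by rewrite -e upd_id.
have h1 := cnt_upd c i b (c i); have h2 := cnt_upd c i b b.
rewrite !eqxx (negbTE ne) eq_sym (negbTE ne) /= in h1 h2; lia.
Qed.

Lemma pcC (c : cfg n K) a b : pc R c a b = pc R c b a.
Proof. by rewrite /pc addnC. Qed.

Lemma key (c c' : cfg n K) a b : c != c' ->
  pi c * (pc R c a b * oriented_step pi c a b c') =
  pi c' * (pc R c' a b * oriented_step pi c' b a c).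
Proof.
move=> hcc.
case: (pickP (fun i => (c i == a) && (c' == upd c i b))) => [i /andP[/eqP ha /eqP hc']|hn].
  subst a c'.
  have hb : c i != b by apply: contra hcc => /eqP e; rewrite -e upd_id.
  have e1 : c = upd (upd c i b) i (c i) by rewrite upd_upd upd_id.
  rewrite os_move // pc_upd.
  have hb' : upd c i b i != c i by rewrite upd_at eq_sym.
  have := os_move hb'; rewrite upd_at upd_upd upd_id => ->.
  rewrite /Defs.ratio /condp !upd_upd upd_id.
  set Z := \sum_j pi (upd c i j).
  have h1 := cnt_upd c i b (c i); have h2 := cnt_upd c i b b.
  rewrite !eqxx (negbTE hb) eq_sym (negbTE hb) /= in h1 h2.
  rewrite addn0 in h1; rewrite addn0 in h2.
  have eZ : \sum_j pi (upd (upd c i b) i j) = Z by apply: eq_bigr => j _; rewrite upd_upd.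
  rewrite eZ h2 -h1 addn1.
  by apply: alg => //; rewrite ltr0n // addn1.
rewrite (os_zero (a := a) (b := b) _ _); last first.
- by move=> i hi; apply/negP => /eqP e; have := hn i; rewrite hi eqxx e eqxx.
- by rewrite eq_sym.
rewrite os_zero ?mulr0 //.
move=> j hj; apply/negP => /eqP e.
have := hn j; rewrite e upd_at eqxx upd_upd -hj upd_id eqxx.
by [].
Qed.

Lemma PR_rev : reversible (PR pi) pi.
Proof.
move=> c c'; have [->|hcc] := eqVneq c c'; first by [].
rewrite /PR !mulr_sumr; apply: eq_bigr => k _; rewrite !mulr_sumr; apply: eq_bigr => k' _.
rewrite !mulrDr.
have E a b : pi c * (pc R c a b * (2^-1 * oriented_step pi c a b c')) =
   2^-1 * (pi c' * (pc R c' a b * oriented_step pi c' b a c)).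
  by rewrite -key //; ring.
rewrite E [pc R c k k']pcC E pcC; ring.
Qed.


Lemma PR_stat y : \sum_x pi x * PR pi x y = pi y.
Proof.
under eq_bigr => x _ do rewrite PR_rev.
by rewrite -mulr_sumr PR_sum mulr1.
Qed.

Lemma double_pos (F : 'I_K -> 'I_K -> R) (k k' : 'I_K) :
  (forall a b, 0 <= F a b) -> (k < k')%N -> 0 < F k k' ->
  0 < \sum_(a : 'I_K) \sum_(b : 'I_K | (a < b)%N) F a b.
Proof.
move=> h0 hk hp; rewrite (bigD1 k) //= (bigD1 k') //=.
rewrite -addrA ltr_wpDr //; apply: addr_ge0; apply: sumr_ge0 => *; first exact: h0.
by apply: sumr_ge0 => *.
Qed.

Lemma term_pos (c c' : cfg n K) a b : a != b ->
  0 < pc R c a b * oriented_step pi c a b c' -> 0 < PR pi c c'.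
Proof.
move=> hab hp; rewrite /PR.
have h0 x y : 0 <= pc R c x y * (2^-1 * oriented_step pi c x y c' + 2^-1 * oriented_step pi c y x c').
  by apply: mulr_ge0; rewrite ?pc_ge0 // addr_ge0 // mulr_ge0 ?invr_ge0 ?os_ge0.
have hq : 0 <= pc R c a b * oriented_step pi c b a c'.
  by rewrite mulr_ge0 ?pc_ge0 ?os_ge0.
case: (ltngtP a b) => h.
- apply: (double_pos (k := a) (k' := b)) => //.
  set u := pc R c a b * oriented_step pi c a b c' in hp.
  set v := pc R c a b * oriented_step pi c b a c' in hq.
  have -> : pc R c a b * (2^-1 * oriented_step pi c a b c' + 2^-1 * oriented_step pi c b a c')
    = 2^-1 * u + 2^-1 * v by rewrite /u /v; ring.
  have h2 : (0 : R) < 2^-1 by rewrite invr_gt0 ltr0n.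
  by apply: ltr_wpDr; [apply: mulr_ge0 => //; apply: ltW | apply: mulr_gt0].
- apply: (double_pos (k := b) (k' := a)) => //.
  set u := pc R c a b * oriented_step pi c a b c' in hp.
  set v := pc R c a b * oriented_step pi c b a c' in hq.
  have -> : pc R c b a * (2^-1 * oriented_step pi c b a c' + 2^-1 * oriented_step pi c a b c')
    = 2^-1 * v + 2^-1 * u by rewrite /u /v pcC; ring.
  have h2 : (0 : R) < 2^-1 by rewrite invr_gt0 ltr0n.
  by rewrite addrC; apply: ltr_wpDr; [apply: mulr_ge0 => //; apply: ltW | apply: mulr_gt0].
- by move: hab; rewrite -val_eqE /= h eqxx.
Qed.

Hypothesis pi_pos : forall c, 0 < pi c.

Lemma pc_pos (c : cfg n K) a b : (0 < cnt c a)%N -> 0 < pc R c a b.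
Proof.
move=> h; rewrite /pc divr_gt0 // ltr0n ?muln_gt0; lia.
Qed.

Lemma condp_pos (c : cfg n K) i k : 0 < condp pi c i k.
Proof.
rewrite /condp divr_gt0 // (bigD1 k) //= ltr_wpDr //.
by apply: sumr_ge0 => *.
Qed.

Lemma PR_move_pos (c : cfg n K) i b : c i != b -> 0 < PR pi c (upd c i b).
Proof.
move=> hb; apply: (term_pos (a := c i) (b := b)) => //.
rewrite os_move // mulr_gt0 ?pc_pos ?cnt_pos // mulr_gt0 ?invr_gt0 ?ltr0n ?cnt_pos //.
rewrite lt_min ltr01 /Defs.ratio; apply: mulr_gt0; last by apply: divr_gt0; apply: condp_pos.
by rewrite divr_gt0 // ltr0n ?cnt_pos // addn1.
Qed.

Definition k0 : 'I_K := Ordinal (ltnW K2).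
Definition k1 : 'I_K := Ordinal K2.
Definition c0 : cfg n K := [ffun _ => k0].

Lemma loop_pos : 0 < PR pi c0 c0.
Proof.
have h1 : cnt c0 k1 = 0%N.
  by apply/eqP; rewrite cards_eq0; apply/eqP/setP => j; rewrite !inE ffunE.
have h0 : (0 < cnt c0 k0)%N.
  by have := cnt_pos c0 (Ordinal n1); rewrite ffunE.
apply: (term_pos (a := k1) (b := k0)); first by rewrite -val_eqE.
rewrite /oriented_step h1 !eqxx /= mulr1 pcC; exact: pc_pos.
Qed.

Let P := PR pi.
Let Pge0 : forall x y, 0 <= P x y := PR_ge0.

Lemma reach_trans x y z : (exists t, 0 < kpow P t x y) -> (exists t, 0 < kpow P t y z) ->
  exists t, 0 < kpow P t x z.
Proof.
case=> s hs [t ht]; exists (s + t)%N; exact: (kpow_pos_trans Pge0 hs ht).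
Qed.

Lemma irred : irreducible P.
Proof.
move=> x y.
pose mix (m : nat) : cfg n K := [ffun j : 'I_n => if (j < m)%N then y j else x j].
have H m : (m <= n)%N -> exists t, 0 < kpow P t x (mix m).
  elim: m => [|m IH] hm.
    exists 0%N => /=; have -> : mix 0%N = x by apply/ffunP => j; rewrite ffunE.
    by rewrite eqxx ltr01.
  have [t ht] := IH (ltnW hm).
  pose j0 : 'I_n := Ordinal hm.
  have e : mix m.+1 = upd (mix m) j0 (y j0).
    apply/ffunP => j; rewrite updE !ffunE -val_eqE /= ltnS leq_eqVlt.
    by case: eqP => //= e; congr (y _); apply: val_inj.
  have [he|hne] := eqVneq (mix m j0) (y j0).
    by exists t; rewrite e -he upd_id.
  apply: (reach_trans (ex_intro _ t ht)); exists 1%N.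
  by rewrite kpow1 e; apply: PR_move_pos.
have [t ht] := H n (leqnn n); exists t.
suff <- : mix n = y by [].
by apply/ffunP => j; rewrite ffunE ltn_ord.
Qed.

Lemma aper : aperiodic P.
Proof.
move=> x d hd hdiv.
have [a ha] := irred x c0; have [b hb] := irred c0 x.
have l1 : 0 < kpow P 1 c0 c0 by rewrite kpow1; apply: loop_pos.
have t1 := kpow_pos_trans Pge0 (kpow_pos_trans Pge0 ha l1) hb.
have t2 := kpow_pos_trans Pge0 (kpow_pos_trans Pge0 (kpow_pos_trans Pge0 ha l1) l1) hb.
have d1 := hdiv (a + 1 + b)%N (ltac:(lia)) t1.
have d2 := hdiv (a + 1 + 1 + b)%N (ltac:(lia)) t2.
have : (d %| 1)%N.
  have e : (a + 1 + 1 + b = (a + 1 + b) + 1)%N by lia.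
  by rewrite e dvdn_addr in d2.
rewrite dvdn1 => /eqP; lia.
Qed.

Lemma prim : exists T, (0 < T)%N /\ forall x y, 0 < kpow P T x y.
Proof.
have ex1 x : exists t, [pred t | 0 < kpow P t x c0] t by have [t h] := irred x c0; exists t.
have ex2 y : exists t, [pred t | 0 < kpow P t c0 y] t by have [t h] := irred c0 y; exists t.
pose A x := ex_minn (ex1 x). pose B y := ex_minn (ex2 y).
have hA x : 0 < kpow P (A x) x c0 by rewrite /A; case: ex_minnP.
have hB y : 0 < kpow P (B y) c0 y by rewrite /B; case: ex_minnP.
have l1 : 0 < kpow P 1 c0 c0 by rewrite kpow1; apply: loop_pos.
have pad m : 0 < kpow P m.+1 c0 c0.
  elim: m => [//|m IH]; by have := kpow_pos_trans Pge0 IH l1; rewrite addn1.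
pose TA := (\max_x A x)%N. pose TB := (\max_y B y)%N.
exists (TA + 1 + TB)%N; split; first lia.
move=> x y.
have ax : (A x <= TA)%N by apply: leq_bigmax.
have by_ : (B y <= TB)%N by apply: leq_bigmax.
have -> : (TA + 1 + TB = A x + (TA - A x + TB - B y).+1 + B y)%N by lia.
have := kpow_pos_trans Pge0 (kpow_pos_trans Pge0 (hA x) (pad (TA - A x + TB - B y)%N)) (hB y).
by [].
Qed.

End Model.

Unset Implicit Arguments.
Theorem lemma1 (R : realFieldType) (n K : nat) (pi : cfg n K -> R) :
  (2 <= K)%N -> (1 <= n)%N -> is_prob pi ->
  reversible (PR pi) pi /\
  ((forall c, 0 < pi c) ->
     [/\ irreducible (PR pi), aperiodic (PR pi) & uniformly_ergodic (PR pi) pi]).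
Proof.
move=> K2 n1 hp; have pi0 : forall c, 0 <= pi c by case: hp.
split; first exact: PR_rev.
move=> hpos; split.
- exact: irred.
- exact: aper.
- apply: gen_ergodic => //.
  + exact: (PR_ge0 pi0).
  + move=> x; exact: (@PR_sum R n K pi K2 n1 x).
  + exact: (PR_stat K2 n1 pi0).
  + exact: (prim K2 n1 pi0 hpos).
Qed.
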